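(* Let $\mathcal{H}$ be a finite-dimensional real inner-product space with norm $\|\cdot\|_{\mathcal{H}}$, and let $\mathscr{R}_*:\mathcal{H}\to\mathcal{H}$ be a continuous quasinonexpansive operator with nonempty fixed-point set $\mathrm{Fix}(\mathscr{R}_* )$. Let $(\mathscr{R}^{(k)})_{k\in\mathbb{N}}$ be a sequence of (possibly random) operators $\mathcal{H}\to\mathcal{H}$, and consider the iteration \[ x^{(k+1)} = (1-\gamma^{(k)})\,x^{(k)} + \gamma^{(k)}\,\mathscr{R}^{(k)}(x^{(k)}), \qquad k\in\mathbb{N}, \] with step sizes $\gamma^{(k)}\in[0,1]$ satisfying $\sum_{k\in\mathbb{N}}\gamma^{(k)}(1-\gamma^{(k)}) = +\infty$. Define the error $\epsilon^{(k)} \coloneqq \mathscr{R}^{(k)}(x^{(k)}) - \mathscr{R}_*(x^{(k)})$ and $\varepsilon^{(k)} \coloneqq \|\epsilon^{(k)}\|_{\mathcal{H}}$. Let $(\mathcal{F}_k)_{k\in\mathbb{N}}$ be a filtration such that $x^{(k)}$ is $\mathcal{F}_k$-measurable for each $k$. Suppose that almost surely the sequence $(x^{(k)})_{k\in\mathbb{N}}$ is bounded and $\sum_{k\in\mathbb{N}}\gamma^{(k)}\,\mathbb{E}[\varepsilon^{(k)}\mid\mathcal{F}_k] < +\infty$. Then $(x^{(k)})_{k\in\mathbb{N}}$ converges almost surely to a (random) point $x^\dagger \in \mathrm{Fix}(\mathscr{R}_* )$.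
   Context: An operator $\mathscr{R}_*:\mathcal{H}\to\mathcal{H}$ is quasinonexpansive if $\mathrm{Fix}(\mathscr{R}_* )=\{x:\mathscr{R}_*(x)=x\}$ is nonempty and $\|\mathscr{R}_*(x)-x^*\|_{\mathcal{H}}\le\|x-x^*\|_{\mathcal{H}}$ for all $x\in\mathcal{H}$ and all $x^*\in\mathrm{Fix}(\mathscr{R}_* )$. All random objects are defined on a common probability space. *)

(* Defs.v *)
From HB Require Import structures.
From mathcomp Require Import all_boot all_order all_algebra.
From mathcomp Require Import all_classical all_reals all_analysis.
From mathcomp Require Import measurable_realfun.
Set Implicit Arguments. Unset Strict Implicit. Unset Printing Implicit Defensive.
Import Order.TTheory GRing.Theory Num.Theory.
Import numFieldNormedType.Exports.
Local Open Scope classical_set_scope.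
Local Open Scope ring_scope.

(* The finite-dimensional real inner-product space H is modelled as
   'rV[R]_n with the standard (Euclidean) inner product; every
   n-dimensional real inner-product space is isometric to it. *)

Definition edot {R : realType} {n : nat} (u v : 'rV[R]_n) : R :=
  \sum_(i < n) u ord0 i * v ord0 i.
Definition enorm {R : realType} {n : nat} (v : 'rV[R]_n) : R :=
  Num.sqrt (edot v v).

Definition Fix {R : realType} {n : nat} (F : 'rV[R]_n -> 'rV[R]_n) : set 'rV[R]_n :=
  [set x | F x = x].
Definition quasinonexpansive {R : realType} {n : nat} (F : 'rV[R]_n -> 'rV[R]_n) : Prop :=
  Fix F !=set0 /\
  forall x xs, Fix F xs -> enorm (F x - xs) <= enorm (x - xs).

Definition G_measurable_R {d} {T : measurableType d} {R : realType}
  (G : set (set T)) (f : T -> R) : Prop :=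
  forall B : set R, measurable B -> G (f @^-1` B).
Definition G_measurable_eR {d} {T : measurableType d} {R : realType}
  (G : set (set T)) (f : T -> \bar R) : Prop :=
  forall B : set (\bar R), measurable B -> G (f @^-1` B).
(* An R^n-valued map is G-measurable (Borel) iff all its coordinates are. *)
Definition G_measurable_vec {d} {T : measurableType d} {R : realType} {n : nat}
  (G : set (set T)) (f : T -> 'rV[R]_n) : Prop :=
  forall i : 'I_n, G_measurable_R G (fun w => f w ord0 i).

Definition filtration {d} {T : measurableType d} (F : nat -> set (set T)) : Prop :=
  (forall k, sigma_algebra setT (F k)) /\
  (forall k, F k `<=` measurable) /\
  (forall k, F k `<=` F k.+1).

(** Y is a version of the (generalized) conditional expectation E[X | G]
    of the nonnegative random variable X. *)
Definition cond_exp_nonneg {d} {T : measurableType d} {R : realType}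
  (P : probability T R) (G : set (set T)) (X Y : T -> \bar R) : Prop :=
  [/\ measurable_fun setT X, (forall w, (0 <= X w)%E),
      G_measurable_eR G Y, (forall w, (0 <= Y w)%E) &
      forall A, G A -> (\int[P]_(w in A) Y w = \int[P]_(w in A) X w)%E].

(* Main.v *)
Require Import Defs.
From HB Require Import structures.
From mathcomp Require Import all_boot all_order all_algebra.
From mathcomp Require Import all_classical all_reals all_analysis.
From mathcomp Require Import measurable_realfun.
From mathcomp Require Import ring lra.
Import Order.TTheory GRing.Theory Num.Theory.
Import numFieldNormedType.Exports.
Local Open Scope classical_set_scope.
Local Open Scope ring_scope.
Section prob.
Local Open Scope ereal_scope.
Context d (T : measurableType d) (R : realType) (P : probability T R) (F : nat -> set (set T)).
Hypothesis hF : filtration F.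

Lemma Fmono j k : (j <= k)%N -> F j `<=` F k.
Proof.
move=> jk; elim: k jk => [|k IH]; first by rewrite leqn0 => /eqP ->.
rewrite leq_eqVlt => /orP[/eqP -> //|]; rewrite ltnS => /IH H A /H.
by apply: hF.2.2.
Qed.

Lemma GmeasE (G : set (set T)) (f : T -> \bar R) : sigma_algebra setT G ->
  G_measurable_eR G f -> measurable_fun (setT : set (g_sigma_algebraType G)) f.
Proof.
move=> sG hf _ B mB; rewrite setTI.
by rewrite (measurable_g_measurableTypeE sG); apply: hf.
Qed.
Variables (g : nat -> R) (X Y : nat -> T -> \bar R).
Hypothesis g0 : forall k, (0 <= g k)%R.
Hypothesis hXY : forall k, cond_exp_nonneg P (F k) (X k) (Y k).

Definition S k w := \sum_(j < k.+1) (g j)%:E * Y j w.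

Lemma S_meas k c : F k [set w | S k w <= c].
Proof.
have sk := hF.1 k.
have mS : measurable_fun (setT : set (g_sigma_algebraType (F k))) (S k).
  apply: emeasurable_sum => j; apply: measurable_funeM; apply: GmeasE => //.
  have [_ _ hY _ _] := hXY j.
  move=> B mB; have := hY B mB; apply: Fmono.
  by rewrite -ltnS.
have := emeasurable_fun_infty_c measurableT mS c.
by rewrite setTI measurable_g_measurableTypeE.
Qed.

Lemma nneseries_le_bound (u : nat -> \bar R) (M : \bar R) :
  (forall n, 0 <= u n) -> (forall N, \sum_(0 <= i < N) u i <= M) ->
  \sum_(0 <= i <oo) u i <= M.
Proof.
move=> u0 uM; apply: lime_le; first exact: is_cvg_ereal_nneg_natsum.
exact: nearW.
Qed.

Lemma Ymeas k : measurable_fun setT (Y k).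
Proof.
have [_ _ hY _ _] := hXY k.
move=> _ B mB; rewrite setTI; apply: (hF.2.1 k); exact: hY.
Qed.

Lemma Y0 k x : 0 <= Y k x.
Proof. by have [_ _ _ hY _] := hXY k. Qed.

Lemma X0 k x : 0 <= X k x.
Proof. by have [_ hX _ _ _] := hXY k. Qed.

Lemma pathwise_bound (M : R) w : (0 <= M)%R ->
  \sum_(0 <= k <oo) ((fun w => (g k)%:E * Y k w) \_ [set w | S k w <= M%:E]) w
  <= M%:E.
Proof.
move=> M0.
have t0 k : 0 <= ((fun w => (g k)%:E * Y k w) \_ [set w | S k w <= M%:E]) w.
  by apply: erestrict_ge0 => x _; rewrite mule_ge0 ?lee_fin ?Y0.
apply: (@nneseries_le_bound (fun k => _)) => // N.
elim: N => [|N IH]; first by rewrite big_nil lee_fin.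
rewrite big_nat_recr //=.
rewrite {2}/patch; case: ifPn => [|_]; last by rewrite adde0.
rewrite inE /= => SN; apply: le_trans SN.
rewrite /S big_ord_recr /=; apply: leeD2r; rewrite big_mkord.
apply: lee_sum => k _; rewrite /patch; case: ifP => // _.
by rewrite mule_ge0 ?lee_fin ?Y0.
Qed.

Lemma Xmeas k : measurable_fun setT (X k).
Proof. by have [] := hXY k. Qed.

Lemma Hae (M : nat) : {ae P, forall w,
  \sum_(0 <= k <oo) ((fun w => (g k)%:E * X k w) \_ [set w | S k w <= M%:R%:E]) w < +oo}.
Proof.
set A := fun k => [set w | S k w <= M%:R%:E].
have mA k : measurable (A k) by apply: (hF.2.1 k); exact: S_meas.
have tX0 k w : 0 <= ((fun w => (g k)%:E * X k w) \_ (A k)) w.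
  by apply: erestrict_ge0 => x _; rewrite mule_ge0 ?lee_fin ?X0.
have tY0 k w : 0 <= ((fun w => (g k)%:E * Y k w) \_ (A k)) w.
  by apply: erestrict_ge0 => x _; rewrite mule_ge0 ?lee_fin ?Y0.
have mtX k : measurable_fun setT ((fun w => (g k)%:E * X k w) \_ (A k)).
  apply/(measurable_restrictT _ (mA k)).
  apply: (measurable_funS measurableT) => //; apply: measurable_funeM; exact: Xmeas.
have mtY k : measurable_fun setT ((fun w => (g k)%:E * Y k w) \_ (A k)).
  apply/(measurable_restrictT _ (mA k)).
  apply: (measurable_funS measurableT) => //; apply: measurable_funeM; exact: Ymeas.
set h := fun w => \sum_(0 <= k <oo) ((fun w => (g k)%:E * X k w) \_ (A k)) w.
have h0 w : 0 <= h w by apply: nneseries_ge0 => n _ _; exact: tX0.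
have mh : measurable_fun setT h.
  by apply: (ge0_emeasurable_sum (P := xpredT)) => // k x _ _; exact: tX0.
have hint : \int[P]_w h w <= M%:R%:E.
  rewrite /h integral_nneseries //.
  have -> : \sum_(0 <= n <oo) \int[P]_x ((fun w => (g n)%:E * X n w) \_ (A n)) x
      = \sum_(0 <= n <oo) \int[P]_x ((fun w => (g n)%:E * Y n w) \_ (A n)) x.
    congr (limn _); apply/funext => N; apply: eq_bigr => n _.
    rewrite -!integral_mkcond ge0_integralZl_EFin //; last 2 first.
    - by move=> x _; exact: X0.
    - apply: (measurable_funS measurableT) => //; exact: Xmeas.
    rewrite ge0_integralZl_EFin //; last 2 first.
    - by move=> x _; exact: Y0.
    - apply: (measurable_funS measurableT) => //; exact: Ymeas.
    have [_ _ _ _ ->] := hXY n => //.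
    exact: S_meas.
  rewrite -integral_nneseries //.
  apply: le_trans (_ : \int[P]_x (cst M%:R%:E) x <= _).
    apply: ge0_le_integral => //.
    - by move=> x _; apply: nneseries_ge0 => n _ _; exact: tY0.
    - by apply: (ge0_emeasurable_sum (P := xpredT)) => // k x _ _; exact: tY0.
    - by move=> x _; apply: pathwise_bound.
  rewrite integral_cst // [X in _ * X](_ : _ = 1%E) ?mule1 //; exact: probability_setT.

have hI : P.-integrable setT h.
  apply/integrableP; split => //.
  under eq_integral do rewrite gee0_abs //.
  by apply: le_lt_trans hint _; rewrite ltry.
have := integrable_ae measurableT hI.
apply: filterS => w /(_ I) hw.
by move: hw; rewrite ge0_fin_numE ?h0.
Qed.

Lemma key : {ae P, forall w,
  \sum_(0 <= k <oo) (g k)%:E * Y k w < +oo ->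
  \sum_(0 <= k <oo) (g k)%:E * X k w < +oo}.
Proof.
have := ae_foralln Hae.
apply: filterS => w hw hY.
set SY := \sum_(0 <= k <oo) (g k)%:E * Y k w in hY.
have SY0 : 0 <= SY.
  by apply: nneseries_ge0 => n _ _; rewrite mule_ge0 ?lee_fin ?Y0.
have [M hM] : exists M : nat, SY <= M%:R%:E.
  have finSY : SY \is a fin_num by rewrite ge0_fin_numE.
  exists (Num.bound (fine SY)); rewrite -(fineK finSY) lee_fin; apply/ltW/archi_boundP.
  exact: fine_ge0.
have hS k : S k w <= M%:R%:E.
  apply: le_trans hM; rewrite /S -(big_mkord xpredT (fun j => (g j)%:E * Y j w)).
  by apply: nneseries_lim_ge => n _ _; rewrite mule_ge0 ?lee_fin ?Y0.
have := hw M; congr (_ < _); congr (limn _); apply/funext => N.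
apply: eq_bigr => k _; rewrite patchT // inE; exact: hS.
Qed.
End prob.
Set Implicit Arguments. Unset Strict Implicit.
Section vec.
Variables (R : realType) (n : nat).
Local Notation V := 'rV[R]_n.
Implicit Types (u v w : V) (a : R).

Lemma edotC u v : edot u v = edot v u.
Proof. by apply: eq_bigr => i _; rewrite mulrC. Qed.

Lemma edotDl u v w : edot (u + v) w = edot u w + edot v w.
Proof. by rewrite /edot -big_split; apply: eq_bigr => i _; rewrite mxE mulrDl. Qed.

Lemma edotZl a u w : edot (a *: u) w = a * edot u w.
Proof. by rewrite /edot mulr_sumr; apply: eq_bigr => i _; rewrite mxE mulrA. Qed.

Lemma edotNl u w : edot (- u) w = - edot u w.
Proof. by rewrite -scaleN1r edotZl mulN1r. Qed.

Lemma edotBl u v w : edot (u - v) w = edot u w - edot v w.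
Proof. by rewrite edotDl edotNl. Qed.

Lemma edotDr u v w : edot w (u + v) = edot w u + edot w v.
Proof. by rewrite edotC edotDl !(edotC w). Qed.

Lemma edotZr a u w : edot w (a *: u) = a * edot w u.
Proof. by rewrite edotC edotZl edotC. Qed.

Lemma edotBr u v w : edot w (u - v) = edot w u - edot w v.
Proof. by rewrite edotC edotBl !(edotC w). Qed.

Lemma edotNr u w : edot w (- u) = - edot w u.
Proof. by rewrite edotC edotNl edotC. Qed.

Lemma edot0r u : edot u 0 = 0.
Proof. by rewrite /edot big1 // => i _; rewrite mxE mulr0. Qed.

Lemma edot_ge0 u : 0 <= edot u u.
Proof. by apply: sumr_ge0 => i _; rewrite -expr2 sqr_ge0. Qed.

Lemma edot_eq0 u : edot u u = 0 -> u = 0.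
Proof.
move=> /eqP; rewrite psumr_eq0; last by move=> i _; rewrite -expr2 sqr_ge0.
move=> /allP H; apply/rowP => j; rewrite mxE.
by have := H j (mem_index_enum j); rewrite /= mulf_eq0 orbb => /eqP.
Qed.

Lemma enorm_ge0 u : 0 <= enorm u.
Proof. exact: sqrtr_ge0. Qed.

Lemma enorm_sq u : enorm u ^+ 2 = edot u u.
Proof. by rewrite sqr_sqrtr // edot_ge0. Qed.

Lemma CS u v : edot u v <= enorm u * enorm v.
Proof.
have [v0|vpos] : edot v v = 0 \/ 0 < edot v v.
  by move: (edot_ge0 v); rewrite le_eqVlt => /orP[/eqP <-|]; [left|right].
  by rewrite (edot_eq0 v0) edot0r mulr_ge0 ?enorm_ge0.
have H := edot_ge0 (edot v v *: u - edot u v *: v).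
rewrite !(edotBl, edotBr, edotZl, edotZr) (edotC v u) in H.
have uu0 := edot_ge0 u.
have key : edot u v ^+ 2 <= edot u u * edot v v by nra.
apply: le_trans (ler_norm _) _.
rewrite -sqrtr_sqr /enorm -sqrtrM // ler_sqrt ?mulr_ge0 ?(ltW vpos) //.
Qed.

Lemma enormD u v : enorm (u + v) <= enorm u + enorm v.
Proof.
have h0 := addr_ge0 (enorm_ge0 u) (enorm_ge0 v).
rewrite {1}/enorm -(ger0_norm h0) -sqrtr_sqr ler_sqrt ?sqr_ge0 //.
rewrite edotDl !edotDr (edotC v u) sqrrD !enorm_sq.
have := CS u v; lra.
Qed.

Lemma enormZ a u : enorm (a *: u) = `|a| * enorm u.
Proof.
by rewrite /enorm edotZl edotZr mulrA -expr2 sqrtrM ?sqr_ge0 // sqrtr_sqr.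
Qed.

Lemma enormN u : enorm (- u) = enorm u.
Proof. by rewrite -scaleN1r enormZ normrN1 mul1r. Qed.

Lemma enormB u v : enorm (u - v) = enorm (v - u).
Proof. by rewrite -opprB enormN. Qed.

Lemma enorm0 : enorm (0 : V) = 0.
Proof. by rewrite /enorm edot0r sqrtr0. Qed.

Lemma enorm_eq0 u : enorm u = 0 -> u = 0.
Proof.
move=> h; apply: edot_eq0; move: (enorm_sq u); rewrite h expr0n /= => <-.
by [].
Qed.

Lemma coord_le u i : `|u ord0 i| <= enorm u.
Proof.
rewrite -sqrtr_sqr ler_sqrt ?edot_ge0 // /edot (bigD1 i) //= -expr2 lerDl.
by apply: sumr_ge0 => j _; rewrite -expr2 sqr_ge0.
Qed.

Lemma coord_le_mx u i : `|u ord0 i| <= `|u|.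
Proof.
rewrite [leRHS]/Num.Def.normr /= mx_normrE.
exact: (le_bigmax _ _ (ord0, i)).
Qed.

Lemma mx_le_enorm u : `|u| <= enorm u.
Proof.
rewrite [leLHS]/Num.Def.normr /= mx_normrE; apply: bigmax_le => [|[i j] _].
  exact: enorm_ge0.
by rewrite (ord1 i) /=; exact: coord_le.
Qed.

Lemma enorm_le_mx u : enorm u <= n%:R * `|u|.
Proof.
have h0 : 0 <= n%:R * `|u| by rewrite mulr_ge0.
rewrite {1}/enorm -(ger0_norm h0) -sqrtr_sqr ler_sqrt ?sqr_ge0 //.
apply: le_trans (_ : \sum_(i < n) `|u| ^+ 2 <= _).
  apply: ler_sum => i _; have := coord_le_mx u i; have := normr_ge0 (u ord0 i).
  rewrite -expr2 -real_normK ?num_real //; nra.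
rewrite sumr_const card_ord -mulr_natl.
have hn : (n%:R : R) <= n%:R ^+ 2.
  by rewrite -natrX ler_nat; case: (n) => // m; rewrite expnS leq_pmulr // expn_gt0.
have := sqr_ge0 `|u|; rewrite exprMn; nra.
Qed.
End vec.
Lemma nneseries_le_bound' (R : realType) (u : nat -> \bar R) (M : \bar R) :
  (forall n, (0 <= u n)%E) -> (forall N, (\sum_(0 <= i < N) u i <= M)%E) ->
  (\sum_(0 <= i <oo) u i <= M)%E.
Proof.
move=> u0 uM; apply: lime_le; first exact: is_cvg_ereal_nneg_natsum.
exact: nearW.
Qed.

Section det.
Variables (R : realType) (n : nat).
Local Notation V := 'rV[R]_n.
Variables (Rs : V -> V) (x e : nat -> V) (gam : nat -> R).
Hypothesis cRs : continuous Rs.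
Hypothesis qRs : quasinonexpansive Rs.
Hypothesis hx : forall k, x k.+1 = (1 - gam k) *: x k + gam k *: (Rs (x k) + e k).
Hypothesis hg : forall k, 0 <= gam k <= 1.
Hypothesis hdiv : (\sum_(0 <= k <oo) ((gam k * (1 - gam k))%:E) = +oo)%E.
Hypothesis hsum : (\sum_(0 <= k <oo) ((gam k)%:E * (enorm (e k))%:E) < +oo)%E.

Let b k := gam k * enorm (e k).
Let s N := \sum_(0 <= k < N) b k.
Let r k := enorm (x k - Rs (x k)).

Let g0 k : 0 <= gam k. Proof. by case/andP: (hg k). Qed.
Let g1 k : gam k <= 1. Proof. by case/andP: (hg k). Qed.

Let b_ge0 k : 0 <= b k.
Proof. by rewrite /b mulr_ge0 ?enorm_ge0 ?g0. Qed.

Let s_nd : nondecreasing_seq s.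
Proof.
move=> i j ij; rewrite /s [leRHS](big_cat_nat (n:=i)) //= lerDl.
by apply: sumr_ge0 => k _; exact: b_ge0.
Qed.

Let s_bound : exists Bs, forall N, s N <= Bs.
Proof.
have hs := hsum.
set SS := (\sum_(0 <= k <oo) ((gam k)%:E * (enorm (e k))%:E))%E in hs.
have SS0 : (0 <= SS)%E.
  by apply: nneseries_ge0 => k _ _; rewrite -EFinM lee_fin b_ge0.
have finSS : SS \is a fin_num by rewrite ge0_fin_numE.
exists (fine SS) => N; rewrite -lee_fin fineK // /s -sumEFin.
rewrite (eq_bigr (fun k => ((gam k)%:E * (enorm (e k))%:E)%E)) //.
by apply: nneseries_lim_ge => k _ _; rewrite -EFinM lee_fin b_ge0.
Qed.

Let tail eps : 0 < eps -> exists K, forall m, (K <= m)%N -> s m - s K < eps.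
Proof.
move=> eps0.
have [Bs hBs] := s_bound.
have ub : has_ubound (range s) by exists Bs => _ [k _ <-]; exact: hBs.
have cs := nondecreasing_cvgn s_nd ub.
have := (cvgrPdist_lt _ _).1 cs (eps / 2) (divr_gt0 eps0 (ltr0Sn _ 1)).
move=> [K _ hK]; exists K => m km.
have h1 := hK m km; have h2 := hK K (leqnn K).
have := ler_norm (s m - sup (range s)); rewrite distrC.
have := ler_norm (sup (range s) - s K); lra.
Qed.

Let w k z := (1 - gam k) *: (x k - z) + gam k *: (Rs (x k) - z).

Let decomp k z : x k.+1 - z = w k z + gam k *: e k.
Proof. by apply/rowP => i; rewrite /w hx !mxE; ring. Qed.

Let w_le k z : Fix Rs z -> enorm (w k z) <= enorm (x k - z).
Proof.
move=> Fz; apply: le_trans (enormD _ _) _.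
rewrite !enormZ (ger0_norm (g0 k)) ger0_norm ?subr_ge0 ?g1 //.
have := qRs.2 (x k) z Fz; have := g0 k; have := g1 k.
have := enorm_ge0 (x k - z); have := enorm_ge0 (Rs (x k) - z); nra.
Qed.

Let fej k z : Fix Rs z -> enorm (x k.+1 - z) <= enorm (x k - z) + b k.
Proof.
move=> Fz; rewrite decomp; apply: le_trans (enormD _ _) _.
rewrite enormZ (ger0_norm (g0 k)); have := w_le k Fz; rewrite /b; lra.
Qed.

Let s0 : s 0 = 0. Proof. by rewrite /s big_geq. Qed.
Let sS k : s k.+1 = s k + b k. Proof. by rewrite /s big_nat_recr. Qed.

Let a_tail z K d : Fix Rs z ->
  enorm (x (K + d)%N - z) <= enorm (x K - z) + (s (K + d)%N - s K).
Proof.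
move=> Fz; elim: d => [|d IH]; first by rewrite addn0 subrr addr0.
rewrite addnS; apply: le_trans (fej _ Fz) _; rewrite sS; lra.
Qed.

Let a_bound z k : Fix Rs z -> enorm (x k - z) <= enorm (x 0 - z) + s k.
Proof. by move=> Fz; have := a_tail 0 k Fz; rewrite add0n s0 subr0. Qed.

Let c k := gam k * (1 - gam k) * r k ^+ 2.

Let w_sq k z : enorm (w k z) ^+ 2 =
  (1 - gam k) * enorm (x k - z) ^+ 2 + gam k * enorm (Rs (x k) - z) ^+ 2
  - gam k * (1 - gam k) * r k ^+ 2.
Proof.
rewrite /r !enorm_sq /w.
have -> : x k - Rs (x k) = (x k - z) - (Rs (x k) - z).
  by apply/rowP => i; rewrite !mxE; ring.
move: (x k - z) (Rs (x k) - z) => u v.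
rewrite !(edotDl, edotDr, edotNl, edotNr, edotZl, edotZr) (edotC v u).
ring.
Qed.

Let c_step z k A Bs : Fix Rs z -> enorm (x k - z) <= A -> b k <= Bs ->
  c k <= enorm (x k - z) ^+ 2 - enorm (x k.+1 - z) ^+ 2 + (2 * A + Bs) * b k.
Proof.
move=> Fz hA hB.
have h1 : enorm (x k.+1 - z) <= enorm (w k z) + b k.
  rewrite decomp; apply: le_trans (enormD _ _) _.
  by rewrite enormZ (ger0_norm (g0 k)).
have h2 := w_le k Fz.
have h3 : enorm (w k z) ^+ 2 <= enorm (x k - z) ^+ 2 - c k.
  rewrite w_sq /c.
  have q := qRs.2 (x k) z Fz.
  have q2 : enorm (Rs (x k) - z) ^+ 2 <= enorm (x k - z) ^+ 2.
    by have := enorm_ge0 (Rs (x k) - z); nra.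
  have := g0 k; have := g1 k; nra.
have e0 := enorm_ge0 (w k z); have a10 := enorm_ge0 (x k.+1 - z).
have bk := b_ge0 k.
have p1 : enorm (x k.+1 - z) ^+ 2 <= (enorm (w k z) + b k) ^+ 2 by nra.
have p2 : enorm (w k z) * b k <= A * b k by nra.
have p3 : b k * b k <= Bs * b k by nra.
nra.
Qed.

Let c_sum z : Fix Rs z -> exists C, forall N, \sum_(0 <= k < N) c k <= C.
Proof.
move=> Fz; have [Bs hBs] := s_bound.
have Bs0 : 0 <= Bs by have := hBs 0%N; rewrite s0.
set A := enorm (x 0 - z) + Bs.
have hA k : enorm (x k - z) <= A.
  by apply: le_trans (a_bound k Fz) _; rewrite lerD2l.
have hb k : b k <= Bs.
  apply: le_trans (hBs k.+1); rewrite sS lerDr.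
  rewrite /s; apply: sumr_ge0 => j _; exact: b_ge0.
have inv N : \sum_(0 <= k < N) c k <=
    enorm (x 0 - z) ^+ 2 - enorm (x N - z) ^+ 2 + (2 * A + Bs) * s N.
  elim: N => [|N IH]; first by rewrite big_geq // s0 subrr; lra.
  rewrite big_nat_recr //= sS.
  have := c_step Fz (hA N) (hb N); lra.
exists (A ^+ 2 + (2 * A + Bs) * Bs) => N.
apply: le_trans (inv N) _.
have a0A : enorm (x 0 - z) <= A by rewrite lerDl.
have := enorm_ge0 (x 0 - z); have := sqr_ge0 (enorm (x N - z)).
have := hBs N; have : 0 <= 2 * A + Bs by have := enorm_ge0 (x 0 - z); lra.
nra.
Qed.

Let f k := gam k * (1 - gam k).
Let f0 k : 0 <= f k. Proof. by rewrite /f mulr_ge0 ?g0 ?subr_ge0 ?g1. Qed.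
Let f1 k : f k <= 1. Proof. by rewrite /f; have := g0 k; have := g1 k; nra. Qed.
Let c0 k : 0 <= c k. Proof. by rewrite /c mulr_ge0 ?f0 ?sqr_ge0. Qed.

Let liminf_r N d : 0 < d -> exists k, (N <= k)%N /\ r k < d.
Proof.
move=> d0; apply: contrapT => H.
have Hk k : (N <= k)%N -> d <= r k.
  by move=> Nk; rewrite leNgt; apply/negP => rk; apply: H; exists k.
have [z0 Fz0] := qRs.1.
have [C hC] := c_sum Fz0.
have fc k : (N <= k)%N -> f k <= c k / d ^+ 2.
  move=> Nk; rewrite ler_pdivlMr ?exprn_gt0 // /c -/(f k).
  have := Hk k Nk; have := f0 k; have := enorm_ge0 (x k - Rs (x k)); rewrite -/(r k).
  move=> r0 fk dr; apply: ler_wpM2l => //; nra.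
have bnd M : \sum_(0 <= k < M) f k <= N%:R + C / d ^+ 2.
  apply: le_trans (_ : \sum_(0 <= k < maxn M N) f k <= _).
    rewrite [leRHS](big_cat_nat (n:=M)) //= ?leq_maxl // lerDl.
    by apply: sumr_ge0 => k _; exact: f0.
  rewrite (big_cat_nat (n:=N)) //= ?leq_maxr //; apply: lerD.
    apply: le_trans (_ : \sum_(0 <= k < N) (1 : R) <= _).
      by apply: ler_sum => k _; exact: f1.
    by rewrite sumr_const_nat subn0.
  apply: le_trans (_ : \sum_(N <= k < maxn M N) (c k / d ^+ 2) <= _).
    apply: ler_sum_nat => k /andP[Nk _]; exact: fc.
  rewrite -mulr_suml ler_pM2r ?invr_gt0 ?exprn_gt0 //.
  apply: le_trans (hC (maxn M N)).
  rewrite [leRHS](big_cat_nat (n:=N)) //= ?leq_maxr // lerDr.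
  by apply: sumr_ge0 => k _; exact: c0.
have : (\sum_(0 <= k <oo) ((gam k * (1 - gam k))%:E) <= (N%:R + C / d ^+ 2)%:E)%E.
  apply: nneseries_le_bound' => [k|M]; first by rewrite lee_fin f0.
  by rewrite sumEFin lee_fin; exact: bnd.
by rewrite hdiv leye_eq.
Qed.

Lemma det_conv : exists xb, (x @ \oo --> xb) /\ Fix Rs xb.
Proof.
have [z0 Fz0] := qRs.1.
have [Bs hBs] := s_bound.
have Bs0 : 0 <= Bs by have := hBs 0%N; rewrite s0.
set B := enorm (x 0 - z0) + Bs + `|z0| + 1.
have B0 : 0 < B.
  by rewrite /B; have := enorm_ge0 (x 0 - z0); have := normr_ge0 z0; lra.
have xB k : `|x k| <= B.
  have -> : x k = (x k - z0) + z0 by rewrite subrK.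
  apply: le_trans (ler_normD _ _) _.
  have := mx_le_enorm (x k - z0); have := a_bound k Fz0; have := hBs k.
  rewrite /B; lra.
pose G := filter_from [set p : nat * R | 0 < p.2]
  (fun p => [set k | (p.1 <= k)%N /\ r k < p.2]).
have GF : ProperFilter G.
  apply: filter_from_proper; first apply: filter_from_filter.
  - by exists (0%N, 1); rewrite /= ltr01.
  - move=> [N1 d1] [N2 d2] /= h1 h2; exists (maxn N1 N2, Num.min d1 d2).
      by rewrite /= lt_min h1 h2.
    move=> k /= [Nk rk]; move: rk; rewrite lt_min => /andP[rk1 rk2].
    split; split => //.
      by apply: leq_trans Nk; exact: leq_maxl.
    by apply: leq_trans Nk; exact: leq_maxr.
  - move=> [N d] /= d0; have [k [Nk rk]] := liminf_r N d0; by exists k.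
set K := closed_ball (0 : V) B.
have cK : compact K.
  apply: bounded_closed_compact; last exact: closed_ball_closed.
  exists B; split; first exact: num_real.
  move=> M BM v; rewrite /K closed_ballE // /closed_ball_ /= sub0r normrN => vB.
  by apply: le_trans vB (ltW BM).
have FK : (x @ G) K.
  exists (0%N, 1); first by rewrite /= ltr01.
  move=> k _; rewrite /K closed_ballE // /closed_ball_ /= sub0r normrN; exact: xB.
have [xb [_ clxb]] := cK (x @ G) _ FK.
have clu N d (Bn : set V) : 0 < d -> nbhs xb Bn ->
    exists k, [/\ (N <= k)%N, r k < d & Bn (x k)].
  move=> d0 nB.
  have := clxb (x @` [set k | (N <= k)%N /\ r k < d]) Bn _ nB.
  case; first by exists (N, d) => // k hk; exists k.
  by move=> _ [[k [Nk rk] <-] Bk]; exists k.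
have nb d : 0 < d -> nbhs xb [set y | `|xb - y| < d].
  by move=> d0; exact: ((@cvgrPdist_lt _ _ _ (nbhs xb) _ id xb).1 (@cvg_id _ _) d d0).
have nR d : 0 < d -> nbhs xb [set y | `|Rs xb - Rs y| < d].
  by move=> d0; exact: ((@cvgrPdist_lt _ _ _ (nbhs xb) _ Rs (Rs xb)).1 (@cRs xb) d d0).
have n0 : (0 : R) <= n%:R by [].
have Fxb : Fix Rs xb.
  rewrite /Fix /=; apply/esym/subr0_eq/enorm_eq0.
  set t := enorm (xb - Rs xb).
  have tle d : 0 < d -> t <= (2 * n%:R + 1) * d.
    move=> d0.
    have [k [_ rk [h1 h2]]] := clu 0%N d _ d0 (filterI (nR d d0) (nb d d0)).
    rewrite /t; have -> : xb - Rs xb = (xb - x k) + (x k - Rs (x k)) + (Rs (x k) - Rs xb).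
      by apply/rowP => i; rewrite !mxE; ring.
    apply: le_trans (enormD _ _) _; apply: le_trans (lerD (enormD _ _) (lexx _)) _.
    rewrite (enormB (Rs (x k))).
    have := enorm_le_mx (xb - x k); have := enorm_le_mx (Rs xb - Rs (x k)).
    have : n%:R * `|xb - x k| <= n%:R * d by rewrite ler_wpM2l // ltW.
    have : n%:R * `|Rs xb - Rs (x k)| <= n%:R * d by rewrite ler_wpM2l // ltW.
    rewrite -/(r k); lra.
  apply/eqP; rewrite eq_le enorm_ge0 andbT; apply/ler_addgt0Pr => eps eps0.
  rewrite add0r.
  have p0 : (0:R) < 2 * n%:R + 1 by lra.
  have h := tle (eps / (2 * n%:R + 1)) (divr_gt0 eps0 p0).
  by apply: le_trans h _; rewrite mulrC -mulrA mulVf ?mulr1 // gt_eqF.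
exists xb; split => //.
apply/cvgrPdist_lt => eps eps0.
have [K0 hK] := tail (divr_gt0 eps0 (ltr0Sn _ 1)).
set d := eps / (2 * (n%:R + 1)).
have p1 : (0:R) < n%:R + 1 by lra.
have d0 : 0 < d by rewrite divr_gt0 // mulr_gt0.
have hd : n%:R * d = eps / 2 - d.
  by rewrite /d; field; exact: lt0r_neq0.
have [k [K0k _ hk]] := clu K0 1 _ ltr01 (nb d d0).
exists k => // m /= km.
apply: le_lt_trans (mx_le_enorm _) _.
rewrite enormB -(subnKC km).
apply: le_lt_trans (a_tail _ _ Fxb) _.
rewrite subnKC // enormB.
have := enorm_le_mx (xb - x k).
have : n%:R * `|xb - x k| <= n%:R * d by rewrite ler_wpM2l // ltW.
have := hK m (leq_trans K0k km); have := s_nd K0k.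
lra.
Qed.
End det.
Unset Implicit Arguments.

Theorem mainTheorem2 (R : realType) (n : nat) (d : measure_display)
  (T : measurableType d) (P : probability T R)
  (Rstar : 'rV[R]_n -> 'rV[R]_n)
  (Rk : nat -> T -> 'rV[R]_n -> 'rV[R]_n)
  (x : nat -> T -> 'rV[R]_n)
  (gamma : nat -> R)
  (F : nat -> set (set T))
  (Econd : nat -> T -> \bar R) :
  continuous Rstar ->
  quasinonexpansive Rstar ->
  (forall k w, x k.+1 w = (1 - gamma k) *: x k w + gamma k *: Rk k w (x k w)) ->
  (forall k, 0 <= gamma k <= 1) ->
  (\sum_(0 <= k <oo) ((gamma k * (1 - gamma k))%:E) = +oo)%E ->
  filtration F ->
  (forall k, G_measurable_vec (F k) (x k)) ->
  (forall k, cond_exp_nonneg P (F k)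
               (fun w => (enorm (Rk k w (x k w) - Rstar (x k w)))%:E)
               (Econd k)) ->
  {ae P, forall w, (exists M : R, forall k, enorm (x k w) <= M) /\
                   (\sum_(0 <= k <oo) ((gamma k)%:E * Econd k w) < +oo)%E} ->
  exists xdag : T -> 'rV[R]_n,
    {ae P, forall w, ((fun k => x k w) @ \oo --> xdag w) /\ Fix Rstar (xdag w)}.
Proof.
move=> cRs qRs hx hg hdiv hF _ hce hae.
have g0 k : 0 <= gamma k by case/andP: (hg k).
have hk := @key _ _ _ P F hF gamma _ Econd g0 hce.
exists (fun w => lim ((fun k => x k w) @ \oo)).
apply: filterS2 hk hae => w hXY [_ hY].
have hs := hXY hY.
have hx' k : x k.+1 w = (1 - gamma k) *: x k w +
    gamma k *: (Rstar (x k w) + (Rk k w (x k w) - Rstar (x k w))).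
  by rewrite hx [Rstar _ + _]addrC subrK.
have [xb [cv Fxb]] := det_conv cRs qRs hx' hg hdiv hs.
by rewrite (cvg_lim _ cv).
Qed.
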